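(* Let $m>1$, $n>0$ and let $P_{m,n}$ be the exponentially $(m,n)$-generic class of presentations $\langle a_1,\dots,a_m\mid r_1,\dots,r_n\rangle$ in which every group $G$ is non-free and every $m$-tuple generating a non-free subgroup of $G$ is Nielsen-equivalent to $(a_1,\dots,a_m)$. Then for every group $G$ defined by a presentation in $P_{m,n}$ and every $m$-generated group $H$, every homomorphism $\phi:H\to G$ satisfies either $\phi(H)=G$ or $\phi(H)$ is free. In particular every such $G$ is co-Hopfian (every injective endomorphism of $G$ is surjective), and every automorphism of $G$ is induced by an automorphism of $F(a_1,\dots,a_m)$.
   Context: Nielsen equivalence of $m$-tuples in $G$ is the equivalence relation generated by the moves $g_i\mapsto g_i^{-1}$, swapping $g_i$ and $g_j$, and $g_i\mapsto g_ig_j$ ($j\ne i$). An automorphism $\beta$ of $G=F/N$ is induced by $\alpha\in\mathrm{Aut}(F)$ if $\beta(wN)=\alpha(w)N$ for all $w\in F$. Exponential $(m,n)$-genericity: with $N(m,n,t)$ the number of presentations with $n$ nontrivial cyclically reduced relators of length $\le t$ and $N_P(m,n,t)$ those in the class, $1-N_P/N\le c^t$ for some $c<1$ and all large $t$. *)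

(* Defs.v *)
(* groups are possibly infinite, so we use an
   explicit record of group axioms. *)
From Stdlib Require Import Relations List.
From mathcomp Require Import all_boot.
Set Implicit Arguments. Unset Strict Implicit. Unset Printing Implicit Defensive.

Record group := Group {
  gcar :> Type;
  gmul : gcar -> gcar -> gcar;
  ginv : gcar -> gcar;
  gone : gcar;
  gmulA : forall x y z, gmul x (gmul y z) = gmul (gmul x y) z;
  gmul1 : forall x, gmul gone x = x;
  gmulV : forall x, gmul (ginv x) x = gone }.
Arguments gmul {g}. Arguments ginv {g}. Arguments gone {g}.

Definition is_hom (G K : group) (f : G -> K) : Prop :=
  forall x y, f (gmul x y) = gmul (f x) (f y).

(** Words: a letter (a, false) stands for a, (a, true) for a^-1. *)
Definition evalw (A : Type) (G : group) (f : A -> G) (w : seq (A * bool)) : G :=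
  foldr (fun l acc => gmul (if l.2 then ginv (f l.1) else f l.1) acc) gone w.

Fixpoint reducedP (A : Type) (w : seq (A * bool)) : Prop :=
  match w with
  | x :: ((y :: _) as t) => ~ (y.1 = x.1 /\ y.2 = ~~ x.2) /\ reducedP t
  | _ => True
  end.

Definition cyc_reducedP (A : Type) (w : seq (A * bool)) : Prop :=
  reducedP w /\
  match w with
  | [::] => True
  | x :: _ => ~ ((last x w).1 = x.1 /\ (last x w).2 = ~~ x.2)
  end.

Definition letter (m : nat) := ('I_m * bool)%type.
Definition word (m : nat) := seq (letter m).
Definition inv_letter m (x : letter m) : letter m := (x.1, ~~ x.2).
Definition inv_word m (w : word m) : word m := rev (map (@inv_letter m) w).

(** Equality in the group <a_1..a_m | R>: congruence generated by free
    cancellation and deletion of relators. pres_eq [::] is equality in F. *)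
Inductive pres_eq (m : nat) (R : seq (word m)) : word m -> word m -> Prop :=
| pe_refl w : pres_eq R w w
| pe_sym u v : pres_eq R u v -> pres_eq R v u
| pe_trans u v w : pres_eq R u v -> pres_eq R v w -> pres_eq R u w
| pe_cancel u v x : pres_eq R (u ++ x :: inv_letter x :: v) (u ++ v)
| pe_rel u v r : r \in R -> pres_eq R (u ++ r ++ v) (u ++ v).

(** G, with images g i of the generators a_i, is the group defined by
    <a_1..a_m | R> (i.e. G = F/N, N the normal closure of R, gN = a_i N). *)
Definition presents (m : nat) (R : seq (word m)) (G : group) (g : 'I_m -> G) : Prop :=
  (forall x : G, exists w : word m, evalw g w = x) /\
  (forall w1 w2 : word m, evalw g w1 = evalw g w2 <-> pres_eq R w1 w2).

Definition gen_by (m : nat) (G : group) (t : 'I_m -> G) (x : G) : Prop :=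
  exists w : word m, evalw t w = x.

Definition m_generated (m : nat) (H : group) : Prop :=
  exists h : 'I_m -> H, forall x : H, gen_by h x.

Definition free_subgroup (G : group) (S : G -> Prop) : Prop :=
  exists B : G -> Prop,
    (forall x : G, S x <->
       exists w : seq (G * bool), (forall l, List.In l w -> B l.1) /\ evalw id w = x) /\
    (forall w : seq (G * bool), (forall l, List.In l w -> B l.1) ->
       reducedP w -> w <> [::] -> evalw id w <> gone).

Definition free_group (G : group) : Prop := free_subgroup (fun _ : G => True).

Inductive nielsen_step (m : nat) (G : group) (t t' : 'I_m -> G) : Prop :=
| ns_inv (i : 'I_m) :
    (forall k, t' k = if k == i then ginv (t k) else t k) -> nielsen_step t t'
| ns_swap (i j : 'I_m) :
    (forall k, t' k = if k == i then t j else if k == j then t i else t k) ->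
    nielsen_step t t'
| ns_mul (i j : 'I_m) : i != j ->
    (forall k, t' k = if k == i then gmul (t i) (t j) else t k) ->
    nielsen_step t t'.

Definition nielsen_equiv (m : nat) (G : group) : relation ('I_m -> G) :=
  clos_refl_sym_trans _ (@nielsen_step m G).

Definition substw (m : nat) (a : 'I_m -> word m) (w : word m) : word m :=
  flatten (map (fun x : letter m => if x.2 then inv_word (a x.1) else a x.1) w).

Definition autF (m : nat) (a : 'I_m -> word m) : Prop :=
  exists b : 'I_m -> word m, forall i : 'I_m,
    pres_eq [::] (substw a (b i)) [:: (i, false)] /\
    pres_eq [::] (substw b (a i)) [:: (i, false)].

Definition induced_by (m : nat) (G : group) (g : 'I_m -> G) (beta : G -> G)
  (a : 'I_m -> word m) : Prop :=
  forall w : word m, beta (evalw g w) = evalw g (substw a w).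

(* Main.v *)
Require Import Defs.
From Stdlib Require Import Relations List Classical.
From mathcomp Require Import all_boot.
Set Implicit Arguments. Unset Strict Implicit. Unset Printing Implicit Defensive.

Section Grp.
Variable G : group.
Implicit Types x y : G.

Lemma mulrV' x : gmul x (ginv x) = gone.
Proof.
have h : gmul (ginv (ginv x)) (ginv x) = gone := gmulV _.
transitivity (gmul (gmul (ginv (ginv x)) (ginv x)) (gmul x (ginv x))).
  by rewrite h gmul1.
by rewrite -gmulA (gmulA (ginv x) x (ginv x)) gmulV gmul1.
Qed.

Lemma mulr1' x : gmul x gone = x.
Proof. by rewrite -(gmulV x) gmulA mulrV' gmul1. Qed.

Lemma inv_uniq x y : gmul x y = gone -> x = ginv y.
Proof. move=> H. by rewrite -[x]mulr1' -(mulrV' y) gmulA H gmul1. Qed.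

Lemma ginvM x y : ginv (gmul x y) = gmul (ginv y) (ginv x).
Proof.
symmetry; apply: inv_uniq.
by rewrite gmulA -(gmulA (ginv y)) gmulV mulr1' gmulV.
Qed.

Lemma ginv1 : ginv (@gone G) = gone.
Proof. by symmetry; apply: inv_uniq; rewrite gmul1. Qed.

Lemma ginvK x : ginv (ginv x) = x.
Proof. by symmetry; apply: inv_uniq; rewrite mulrV'. Qed.
End Grp.

Lemma hom1 (G K : group) (f : G -> K) : is_hom f -> f gone = gone.
Proof.
move=> hf.
have e : gmul (f gone) (f gone) = f gone by rewrite -hf gmul1.
transitivity (gmul (ginv (f gone)) (gmul (f gone) (f gone))).
  by rewrite gmulA gmulV gmul1.
by rewrite e gmulV.
Qed.

Lemma homV (G K : group) (f : G -> K) x : is_hom f -> f (ginv x) = ginv (f x).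
Proof. move=> hf; apply: inv_uniq; by rewrite -hf gmulV hom1. Qed.

Section Words.
Variable (A : Type) (G : group).

Lemma evalw_cat (t : A -> G) u v : evalw t (u ++ v) = gmul (evalw t u) (evalw t v).
Proof. elim: u => [|l u IH] /=; first by rewrite gmul1. by rewrite IH gmulA. Qed.

Lemma eq_evalw (t t' : A -> G) w : (forall i, t i = t' i) -> evalw t w = evalw t' w.
Proof. move=> E; elim: w => [|l w IH] //=; by rewrite IH E. Qed.

Lemma evalw_hom (K : group) (f : G -> K) (t : A -> G) w : is_hom f ->
  evalw (fun i => f (t i)) w = f (evalw t w).
Proof.
move=> hf; elim: w => [|[a b] w IH] /=; first by rewrite hom1.
by rewrite IH hf; case: b => //; rewrite homV.
Qed.
End Words.

Lemma evalw_map (G : group) (f : G -> G) (w : seq (G * bool)) : is_hom f ->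
  evalw id (map (fun l => (f l.1, l.2)) w) = f (evalw id w).
Proof.
move=> hf; elim: w => [|[a b] w IH] /=; first by rewrite hom1.
by rewrite IH hf; case: b => //; rewrite homV.
Qed.

Section W.
Variable m : nat.
Implicit Types u v w : word m.

Lemma inv_letterK (x : letter m) : inv_letter (inv_letter x) = x.
Proof. by case: x => a b; rewrite /inv_letter /= negbK. Qed.

Lemma inv_word_cat u v : inv_word (u ++ v) = inv_word v ++ inv_word u.
Proof. by rewrite /inv_word map_cat rev_cat. Qed.

Lemma inv_word_cons l w : inv_word (l :: w) = inv_word w ++ [:: inv_letter l].
Proof. by rewrite /inv_word /= rev_cons cats1. Qed.

Lemma inv_wordK w : inv_word (inv_word w) = w.
Proof. elim: w => [|l w IH] //. by rewrite inv_word_cons inv_word_cat IH /= inv_letterK. Qed.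

Lemma substw_cons (a : 'I_m -> word m) (l : letter m) w :
  substw a (l :: w) = (if l.2 then inv_word (a l.1) else a l.1) ++ substw a w.
Proof. by []. Qed.

Lemma substw_cat (a : 'I_m -> word m) u v : substw a (u ++ v) = substw a u ++ substw a v.
Proof. by rewrite /substw map_cat flatten_cat. Qed.

Lemma substw1 (a : 'I_m -> word m) j : substw a [:: (j, false)] = a j.
Proof. by rewrite /substw /= cats0. Qed.

Lemma substw_inv (a : 'I_m -> word m) u : substw a (inv_word u) = inv_word (substw a u).
Proof.
elim: u => [|l u IH] //.
rewrite inv_word_cons substw_cat IH substw_cons inv_word_cat.
by case: l => i [] /=; rewrite cats0 ?inv_wordK.
Qed.

Lemma substw_comp (x y : 'I_m -> word m) w :
  substw x (substw y w) = substw (fun i => substw x (y i)) w.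
Proof.
elim: w => [|l w IH] //.
rewrite !substw_cons substw_cat IH; case: l.2 => //; by rewrite substw_inv.
Qed.

Lemma evalw_inv (G : group) (t : 'I_m -> G) u : evalw t (inv_word u) = ginv (evalw t u).
Proof.
elim: u => [|l u IH] /=; first by rewrite ginv1.
rewrite inv_word_cons evalw_cat IH ginvM /= mulr1'.
by case: l => a [] /=; rewrite ?ginvK.
Qed.

Lemma evalw_subst (G : group) (t : 'I_m -> G) a w :
  evalw t (substw a w) = evalw (fun i => evalw t (a i)) w.
Proof.
elim: w => [|l w IH] //.
rewrite substw_cons evalw_cat IH /=; case: l.2 => //; by rewrite evalw_inv.
Qed.

Lemma evalw_pe (G : group) (t : 'I_m -> G) u v : pres_eq [::] u v -> evalw t u = evalw t v.
Proof.
move=> H; induction H => //.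
- by rewrite IHpres_eq1 IHpres_eq2.
- rewrite !evalw_cat /=; case: x => a [] /=.
    by congr gmul; rewrite gmulA gmulV gmul1.
  by congr gmul; rewrite gmulA mulrV' gmul1.
Qed.

Lemma pe_ctx (R : seq (word m)) u v p q :
  pres_eq R u v -> pres_eq R (p ++ u ++ q) (p ++ v ++ q).
Proof.
move=> H; elim: H p q.
- move=> *; exact: pe_refl.
- move=> *; exact: pe_sym.
- move=> ? ? ? _ H1 _ H2 p q; exact: pe_trans (H1 p q) (H2 p q).
- move=> u0 v0 x p q.
  have -> : p ++ (u0 ++ x :: inv_letter x :: v0) ++ q = (p ++ u0) ++ x :: inv_letter x :: (v0 ++ q) by rewrite -!catA.
  have -> : p ++ (u0 ++ v0) ++ q = (p ++ u0) ++ (v0 ++ q) by rewrite -!catA.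
  exact: pe_cancel.
- move=> u0 v0 r Hr p q.
  have -> : p ++ (u0 ++ r ++ v0) ++ q = (p ++ u0) ++ r ++ (v0 ++ q) by rewrite -!catA.
  have -> : p ++ (u0 ++ v0) ++ q = (p ++ u0) ++ (v0 ++ q) by rewrite -!catA.
  exact: pe_rel.
Qed.

Lemma pe_cat (R : seq (word m)) u u' v v' :
  pres_eq R u u' -> pres_eq R v v' -> pres_eq R (u ++ v) (u' ++ v').
Proof.
move=> H1 H2; apply: (@pe_trans _ _ _ (u' ++ v)).
  exact: (pe_ctx [::] v H1).
have := pe_ctx u' [::] H2; by rewrite !cats0.
Qed.

Lemma pe_inv u v : pres_eq [::] u v -> pres_eq [::] (inv_word u) (inv_word v).
Proof.
elim.
- move=> *; exact: pe_refl.
- move=> *; exact: pe_sym.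
- move=> ? ? ? _ H1 _ H2; exact: pe_trans H1 H2.
- move=> u0 v0 x.
  rewrite !inv_word_cat !inv_word_cons -!catA /= inv_letterK.
  exact: pe_cancel.
- by move=> ? ? r; rewrite in_nil.
Qed.

Lemma pe_cancel_word (R : seq (word m)) (B : word m) p q :
  pres_eq R (p ++ B ++ inv_word B ++ q) (p ++ q).
Proof.
elim: B p q => [|l B IH] p q; first exact: pe_refl.
rewrite inv_word_cons.
have -> : p ++ (l :: B) ++ (inv_word B ++ [:: inv_letter l]) ++ q
   = (p ++ [:: l]) ++ B ++ inv_word B ++ (inv_letter l :: q) by rewrite -!catA.
apply: (pe_trans (IH (p ++ [:: l]) (inv_letter l :: q))).
rewrite -catA /=; exact: pe_cancel.
Qed.

Lemma pe_subst (a : 'I_m -> word m) u v :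
  pres_eq [::] u v -> pres_eq [::] (substw a u) (substw a v).
Proof.
elim.
- move=> *; exact: pe_refl.
- move=> *; exact: pe_sym.
- move=> ? ? ? _ H1 _ H2; exact: pe_trans H1 H2.
- move=> u0 v0 x.
  rewrite !substw_cat !substw_cons.
  have -> : (if (inv_letter x).2 then inv_word (a (inv_letter x).1) else a (inv_letter x).1)
     = inv_word (if x.2 then inv_word (a x.1) else a x.1).
    by case: x => i [] /=; rewrite ?inv_wordK.
  exact: pe_cancel_word.
- by move=> ? ? r; rewrite in_nil.
Qed.

Lemma pe_subst_pt (x y : 'I_m -> word m) w :
  (forall j, pres_eq [::] (x j) (y j)) -> pres_eq [::] (substw x w) (substw y w).
Proof.
move=> H; elim: w => [|l w IH]; first exact: pe_refl.
rewrite !substw_cons; apply: pe_cat => //.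
case: l.2; [exact: pe_inv | exact: H].
Qed.
End W.
Definition AR (m : nat) (G : group) (t t' : 'I_m -> G) :=
  exists a : 'I_m -> word m, autF a /\ forall i, t' i = evalw t (a i).

Section AR.
Variables (m : nat) (G : group).
Implicit Types t : 'I_m -> G.

Lemma AR_refl t : AR t t.
Proof.
exists (fun i => [:: (i, false)]); split.
  exists (fun i => [:: (i, false)]) => i; rewrite substw1; split; exact: pe_refl.
by move=> i /=; rewrite mulr1'.
Qed.

Lemma AR_sym t t' : AR t t' -> AR t' t.
Proof.
case=> a [[b Hb] Ha]; exists b; split.
  by exists a => i; case: (Hb i).
move=> i.
rewrite (eq_evalw _ Ha) -evalw_subst.
by rewrite (evalw_pe t (proj1 (Hb i))) /= mulr1'.
Qed.

Lemma AR_trans t t' t'' : AR t t' -> AR t' t'' -> AR t t''.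
Proof.
case=> a [[b Hb] Ha] [c [[d Hd] Hc]].
exists (fun i => substw a (c i)); split; last first.
  by move=> i; rewrite Hc (eq_evalw _ Ha) -evalw_subst.
exists (fun i => substw d (b i)) => i; split.
- rewrite substw_comp.
  apply: (pe_trans _ (proj1 (Hb i))).
  apply: pe_subst_pt => j.
  rewrite -substw_comp.
  rewrite -[X in pres_eq _ _ X]substw1.
  apply: pe_subst; exact: (proj1 (Hd j)).
- rewrite substw_comp.
  apply: (pe_trans _ (proj2 (Hd i))).
  apply: pe_subst_pt => j.
  rewrite -substw_comp.
  rewrite -[X in pres_eq _ _ X]substw1.
  apply: pe_subst; exact: (proj2 (Hb j)).
Qed.

Lemma AR_step t t' : nielsen_step t t' -> AR t t'.
Proof.
case.
- move=> i H.
  have E : forall k, substw (fun k => [:: (k, k == i)]) [:: (k, k == i)] = [:: (k, false)].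
    by move=> k; rewrite /substw /=; case: (k == i).
  exists (fun k => [:: (k, k == i)]); split.
    by exists (fun k => [:: (k, k == i)]) => k; rewrite E; split; exact: pe_refl.
  by move=> k /=; rewrite H mulr1'; case: (k == i).
- move=> i j H.
  pose s k := if k == i then j else if k == j then i else k.
  have ss : forall k, s (s k) = k.
    move=> k; rewrite /s.
    case: (eqVneq k i) => [->|ki].
      by case: (eqVneq j i) => [->|ji]; rewrite ?eqxx.
    case: (eqVneq k j) => [->|kj]; first by rewrite eqxx.
    by rewrite (negbTE ki) (negbTE kj).
  exists (fun k => [:: (s k, false)]); split.
    exists (fun k => [:: (s k, false)]) => k; rewrite substw1 ss; split; exact: pe_refl.
  move=> k /=; rewrite H mulr1' /s.
  by case: (k == i) => //; case: (k == j).
- move=> i j ij H.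
  have ji : (j == i) = false by rewrite eq_sym (negbTE ij).
  exists (fun k => if k == i then [:: (i, false); (j, false)] else [:: (k, false)]).
  split; last first.
    move=> k /=; rewrite H; case: (k == i) => /=; by rewrite ?mulr1'.
  exists (fun k => if k == i then [:: (i, false); (j, true)] else [:: (k, false)]) => k.
  case: (eqVneq k i) => [->|ki].
    rewrite /substw /= eqxx ji /=; split.
      exact: (pe_cancel _ [:: (i, false)] [::] (j, false)).
    exact: (pe_cancel _ [:: (i, false)] [::] (j, true)).
  rewrite substw1 (negbTE ki) substw1 (negbTE ki); split; exact: pe_refl.
Qed.

Lemma AR_equiv t t' : nielsen_equiv t t' -> AR t t'.
Proof.
move=> H; induction H.
- exact: AR_step.
- exact: AR_refl.
- exact: AR_sym.
- exact: AR_trans IHclos_refl_sym_trans1 IHclos_refl_sym_trans2.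
Qed.
End AR.

Lemma free_transport (G : group) (S S' : G -> Prop) :
  free_subgroup S -> (forall x, S x <-> S' x) -> free_subgroup S'.
Proof.
case=> B [H1 H2] E; exists B; split => // x; rewrite -E; exact: H1.
Qed.

Lemma lift_word (G : group) (f : G -> G) (w' : seq (G * bool)) :
  (forall l, List.In l w' -> exists y, f y = l.1) ->
  exists w, map (fun l => (f l.1, l.2)) w = w'.
Proof.
elim: w' => [|l w' IH] H; first by exists [::].
case: (H l (or_introl erefl)) => y Hy.
case: IH => [l' Hl'|w Hw]; first exact: H l' (or_intror Hl').
by exists ((y, l.2) :: w); rewrite /= Hw Hy; case: l {H Hy}.
Qed.

Lemma reduced_map (G : group) (f : G -> G) (w : seq (G * bool)) :
  injective f -> reducedP w -> reducedP (map (fun l => (f l.1, l.2)) w).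
Proof.
move=> inj; elim: w => [|x w IH] //=.
case: w IH => [|y w] IH //= [H1 H2]; split; last exact: IH.
case=> e1 e2; apply: H1; split => //; exact: inj.
Qed.

Lemma free_of_inj (G : group) (f : G -> G) :
  is_hom f -> injective f -> free_subgroup (fun x : G => exists y, f y = x) ->
  free_group G.
Proof.
move=> hf inj [B' [H1 H2]].
have B'im : forall b, B' b -> exists y, f y = b.
  move=> b Bb; apply/H1; exists [:: (b, false)]; split; last by rewrite /= mulr1'.
  by move=> l [<-|[]].
exists (fun x => B' (f x)); split.
  move=> x; split => // _.
  have [w' [Hw'1 Hw'2]] : exists w' : seq (G * bool), (forall l, List.In l w' -> B' l.1) /\ evalw id w' = f x.
    by apply/H1; exists x.
  have [w Hw] := lift_word (fun l Hl => B'im _ (Hw'1 l Hl)).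
  exists w; split.
    move=> l Hl; apply: (Hw'1 (f l.1, l.2)); rewrite -Hw.
    exact: (List.in_map (fun l => (f l.1, l.2))).
  by apply: inj; rewrite -evalw_map // Hw.
move=> w Hw red ne e.
have := H2 (map (fun l => (f l.1, l.2)) w).
case.
- move=> l; case/List.in_map_iff => l0 [<- Hl0]; exact: Hw.
- exact: reduced_map.
- by case: w {Hw red e} ne.
- by rewrite evalw_map // e hom1.
Qed.

Lemma part1 (m : nat) (G : group) (g : 'I_m -> G)
  (hgen : forall x : G, exists w, evalw g w = x)
  (hN : forall t : 'I_m -> G, ~ free_subgroup (gen_by t) -> nielsen_equiv t g)
  (H : group) : m_generated m H ->
     forall phi : H -> G, is_hom phi ->
       (forall x : G, exists y : H, phi y = x) \/
       free_subgroup (fun x : G => exists y : H, phi y = x).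
Proof.
case=> h hh phi hphi.
pose t := fun i => phi (h i).
have E : forall x, gen_by t x <-> exists y, phi y = x.
  move=> x; split.
    by case=> w <-; exists (evalw h w); rewrite -evalw_hom.
  case=> y <-; case: (hh y) => w <-; exists w; by rewrite /t evalw_hom.
case: (classic (free_subgroup (gen_by t))) => Hf.
  by right; exact: free_transport Hf E.
left; case: (AR_equiv (hN t Hf)) => a [_ Ha] x.
case: (hgen x) => w <-; exists (evalw h (substw a w)).
rewrite -evalw_hom // evalw_subst; symmetry; apply: eq_evalw => i; exact: Ha.
Qed.

Theorem mainTheorem6 (m n : nat) (hm : 1 < m) (hn : 0 < n)
  (R : seq (word m)) (hsize : size R = n)
  (hrel : forall r, r \in R -> r <> [::] /\ cyc_reducedP r)
  (G : group) (g : 'I_m -> G) (hpres : presents R g)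
  (hnonfree : ~ free_group G)
  (hnielsen : forall t : 'I_m -> G,
      ~ free_subgroup (gen_by t) -> nielsen_equiv t g) :
  (forall (H : group), m_generated m H ->
     forall phi : H -> G, is_hom phi ->
       (forall x : G, exists y : H, phi y = x) \/
       free_subgroup (fun x : G => exists y : H, phi y = x)) /\
  (forall f : G -> G, is_hom f -> injective f -> forall x : G, exists y, f y = x) /\
  (forall beta : G -> G, is_hom beta -> bijective beta ->
     exists a : 'I_m -> word m, autF a /\ induced_by g beta a).
Proof.
have hgen := proj1 hpres.
have P1 := part1 hgen hnielsen.
split => //; split.
  move=> f hf inj.
  have mg : m_generated m G by exists g; exact: hgen.
  case: (P1 G mg f hf) => // Hfr.
  by case: hnonfree; exact: free_of_inj hf inj Hfr.
move=> beta hb [binv _ Kb].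
pose t := fun i => beta (g i).
have E : forall x, gen_by t x <-> True.
  move=> x; split => // _.
  case: (hgen (binv x)) => w Hw; exists w.
  by rewrite /t evalw_hom // Hw Kb.
have Hf : ~ free_subgroup (gen_by t).
  move=> Hf; apply: hnonfree; exact: free_transport Hf E.
case: (AR_sym (AR_equiv (hnielsen t Hf))) => a [Aa Ha].
exists a; split => // w.
rewrite -evalw_hom // evalw_subst; apply: eq_evalw => i; exact: Ha.
Qed.
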